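(* Let $G(x)=-x^3$ on $\Omega=\mathbb R^2\times\,]0,1[$, let $m\ge1$, and let positive functions $\widetilde\varrho_\varepsilon$ ($\varepsilon\in\,]0,1]$) solve $\Pi(\widetilde\varrho_\varepsilon)=\varepsilon^{2(m-1)}F+\varepsilon^mG$ on $\Omega$. Let $F(x)=|x^h|^2$. Then for any $l>0$ there is $C(l)>0$ such that, for all $\varepsilon\in\,]0,1]$ and all $x\in\overline{\mathbb B}_l$ (where $\mathbb B_l:=\{x\in\Omega:|x^h|<l\}$): (1) if $m\ge2$, $|\widetilde\varrho_\varepsilon(x)-1|\le C(l)\varepsilon^m$; (2) if $1<m<2$, $|\widetilde\varrho_\varepsilon(x)-1|\le C(l)\varepsilon^{2(m-1)}$; (3) if $m=1$, $|\widetilde\varrho_\varepsilon(x)-\widetilde\varrho(x)|\le C(l)\varepsilon$, where $\widetilde\varrho$ is the positive solution of $\Pi(\widetilde\varrho(x))=F(x)$ on $\Omega$. If instead $F\equiv0$ and $m\ge1$, then $|\widetilde\varrho_\varepsilon(x)-1|\le C\varepsilon^m$ for a constant $C>0$ uniform in $x\in\Omega$ and $\varepsilon\in\,]0,1]$.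
   Context: Points of $\Omega$ are $x=(x^h,x^3)$ with $x^h\in\mathbb R^2$. The pressure is $p(\varrho,\vartheta)=\vartheta^{5/2}P(\varrho/\vartheta^{3/2})+\frac a3\vartheta^4$ with $a>0$, where $P\in C^1([0,\infty))\cap C^2(]0,\infty[)$, $P(0)=0$, $P'(Z)>0$ for all $Z\ge0$, $0<\big(\frac53P(Z)-P'(Z)Z\big)/Z<c$ for all $Z>0$, and $\lim_{Z\to+\infty}P(Z)/Z^{5/3}=P_\infty>0$. Fix a constant $\overline\vartheta>0$ and set $\Pi(\varrho):=\int_1^\varrho\frac{\partial_\varrho p(z,\overline\vartheta)}{z}dz$ for $\varrho>0$. *)

(* Defs.v *)
From Stdlib Require Import Reals.
From Coquelicot Require Import Coquelicot.
Open Scope R_scope.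

Definition pressure (P : R -> R) (a rho theta : R) : R :=
  Rpower theta (5/2) * P (rho / Rpower theta (3/2)) + a / 3 * theta ^ 4.

Definition PiF (P : R -> R) (a thb rho : R) : R :=
  RInt (fun z => Derive (fun r => pressure P a r thb) z / z) 1 rho.

Definition P_hyp (P P' : R -> R) (c Pinf : R) : Prop :=
  (* P in C^1([0,oo)) *)
  (forall Z, 0 < Z -> is_derive P Z (P' Z)) /\
  filterlim (fun h => (P h - P 0) / h) (at_right 0) (locally (P' 0)) /\
  (forall Z, 0 < Z -> continuous P' Z) /\
  filterlim P' (at_right 0) (locally (P' 0)) /\
  (* P in C^2(]0,oo[) *)
  (forall Z, 0 < Z -> ex_derive P' Z /\ continuous (Derive P') Z) /\
  P 0 = 0 /\
  (forall Z, 0 <= Z -> 0 < P' Z) /\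
  (forall Z, 0 < Z -> 0 < (5/3 * P Z - P' Z * Z) / Z /\
                      (5/3 * P Z - P' Z * Z) / Z < c) /\
  0 < Pinf /\
  is_lim (fun Z => P Z / Rpower Z (5/3)) p_infty Pinf.

(* Omega = R^2 x ]0,1[ ; points x = (x1, x2, x3) with x^h = (x1, x2). *)
Definition inOmega (x1 x2 x3 : R) : Prop := 0 < x3 < 1.

Definition normh (x1 x2 : R) : R := sqrt (x1 ^ 2 + x2 ^ 2).

Definition Gfun (x1 x2 x3 : R) : R := - x3.

Definition solves_family (P : R -> R) (a thb m : R) (F : R -> R -> R -> R)
    (rho : R -> R -> R -> R -> R) : Prop :=
  forall eps x1 x2 x3, 0 < eps <= 1 -> inOmega x1 x2 x3 ->
    0 < rho eps x1 x2 x3 /\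
    PiF P a thb (rho eps x1 x2 x3) =
      Rpower eps (2 * (m - 1)) * F x1 x2 x3 + Rpower eps m * Gfun x1 x2 x3.

(* Main.v *)
Require Import Defs.
From Stdlib Require Import Reals Lra.
From Coquelicot Require Import Coquelicot.
Open Scope R_scope.

Definition gf (P' : R -> R) (thb z : R) : R :=
  Rpower thb (5/2) * (P' (z / Rpower thb (3/2)) / Rpower thb (3/2)) / z.

Lemma Rpower_pos' x y : 0 < Rpower x y.
Proof. unfold Rpower. apply exp_pos. Qed.

Lemma deriv_p (P P' : R -> R) a thb z :
  0 < z -> is_derive P (z / Rpower thb (3/2)) (P' (z / Rpower thb (3/2))) ->
  Derive (fun r => pressure P a r thb) z =
    Rpower thb (5/2) * (P' (z / Rpower thb (3/2)) / Rpower thb (3/2)).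
Proof.
  intros Hz HP. apply is_derive_unique. unfold pressure.
  set (s := Rpower thb (3/2)). set (T := Rpower thb (5/2)).
  assert (Hs : 0 < s) by apply Rpower_pos'.
  replace (T * (P' (z / s) / s)) with (T * (P' (z / s) / s) + 0) by ring.
  apply (is_derive_plus (K:=R_AbsRing) (fun r => T * P (r/s)) (fun _ => a/3*thb^4) z (T*(P'(z/s)/s)) 0);
    [| exact (@is_derive_const R_AbsRing R_NormedModule (a/3*thb^4) z)].
  apply is_derive_scal.
  replace (P' (z / s) / s) with (scal (/ s) (P' (z/s))).
  2:{ unfold scal; simpl; unfold mult; simpl. field. lra. }
  apply (is_derive_comp (K:=R_AbsRing) P (fun r => r / s)). exact HP.
  assert (Hd : is_derive (fun r => r / s) z (/ s)).
  { auto_derive. auto. field. lra. }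
  exact Hd.
Qed.

Lemma ballR x e y : ball x e y <-> Rabs (y - x) < e.
Proof. unfold ball; simpl; unfold AbsRing_ball, abs, minus, plus, opp; simpl. tauto. Qed.

Lemma P'_lower (P P' : R -> R) c Pinf :
  P_hyp P P' c Pinf -> forall M, 0 < M ->
  exists kP, 0 < kP /\ forall Z, 0 <= Z <= M -> kP <= P' Z.
Proof.
  intros (HdP & HP0 & HcP' & HlP' & HC2 & HP00 & Hpos & Hc & Hpinf & Hlim) M HM.
  assert (H0 : 0 < P' 0) by (apply Hpos; lra).
  assert (He : 0 < P' 0 / 2) by lra.
  destruct (proj1 (filterlim_locally _ _) HlP' (mkposreal _ He)) as [d Hd].
  simpl in Hd.
  assert (Hnear : forall Z, 0 <= Z < d -> P' 0 / 2 <= P' Z).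
  { intros Z HZ. destruct (Req_dec Z 0) as [->|HZ0]; [lra|].
    assert (Hb : ball 0 d Z) by (apply ballR; rewrite Rminus_0_r, Rabs_right; lra).
    assert (0 < Z) by (destruct (Rle_lt_or_eq_dec 0 Z); [lra|lra| congruence]); specialize (Hd Z Hb ltac:(lra)). apply ballR in Hd.
    simpl in Hd. apply Rabs_def2 in Hd. unfold minus, plus, opp in Hd; simpl in Hd. lra. }
  set (d2 := Rmin (d/2) M).
  assert (Hd2 : 0 < d2) by (unfold d2; apply Rmin_glb_lt; [destruct d; simpl; lra | lra]).
  assert (Hd2M : d2 <= M) by apply Rmin_r.
  destruct (continuity_ab_min P' d2 M Hd2M) as [mx [Hmx Hmxr]].
  { intros z Hz. apply continuity_pt_filterlim. apply HcP'. lra. }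
  assert (Hpm : 0 < P' mx) by (apply Hpos; lra).
  exists (Rmin (P' 0 / 2) (P' mx)). split. apply Rmin_glb_lt; lra.
  intros Z HZ. destruct (Rlt_le_dec Z d2) as [Hl|Hl].
  - eapply Rle_trans. apply Rmin_l. apply Hnear.
    split. lra. assert (d2 <= d/2) by apply Rmin_l. destruct d; simpl in *; lra.
  - eapply Rle_trans. apply Rmin_r. apply Hmx. lra.
Qed.

Lemma cont_gf (P' : R -> R) thb z :
  (forall Z, 0 < Z -> continuous P' Z) -> 0 < z -> continuous (gf P' thb) z.
Proof.
  intros HcP' Hz. unfold gf.
  set (s := Rpower thb (3/2)). set (T := Rpower thb (5/2)).
  assert (Hs : 0 < s) by apply Rpower_pos'.
  apply (continuous_mult (K:=R_AbsRing) (fun z => T * (P' (z/s) / s)) (fun z => / z)).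
  - apply (continuous_mult (K:=R_AbsRing) (fun _ => T) (fun z => P' (z/s) / s)).
    + apply continuous_const.
    + apply (continuous_mult (K:=R_AbsRing) (fun z => P' (z/s)) (fun _ => / s)).
      * apply (continuous_comp (fun z => z / s) P').
        -- apply (ex_derive_continuous (K:=R_AbsRing) (V:=R_NormedModule)). auto_derive. auto.
        -- apply HcP'. apply Rdiv_lt_0_compat; lra.
      * apply continuous_const.
  - apply (ex_derive_continuous (K:=R_AbsRing) (V:=R_NormedModule)). auto_derive. lra.
Qed.

Lemma ex_RInt_gf (P' : R -> R) thb a b :
  (forall Z, 0 < Z -> continuous P' Z) -> 0 < a -> 0 < b -> ex_RInt (gf P' thb) a b.
Proof.
  intros HcP' Ha Hb. apply (ex_RInt_continuous (V:=R_CompleteNormedModule)). intros z Hz. apply cont_gf; auto.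
  assert (0 < Rmin a b) by (apply Rmin_glb_lt; auto). lra.
Qed.

Lemma PiF_eq (P P' : R -> R) a thb rho :
  (forall Z, 0 < Z -> is_derive P Z (P' Z)) -> 0 < rho ->
  PiF P a thb rho = RInt (gf P' thb) 1 rho.
Proof.
  intros HdP Hr. unfold PiF. apply RInt_ext. intros z Hz.
  assert (0 < Rmin 1 rho) by (apply Rmin_glb_lt; lra).
  unfold gf. rewrite (deriv_p P P'). reflexivity. lra.
  apply HdP. apply Rdiv_lt_0_compat. lra. apply Rpower_pos'.
Qed.

Lemma Lip (P P' : R -> R) c Pinf thb :
  P_hyp P P' c Pinf -> forall R0, 0 < R0 ->
  exists k, 0 < k /\ forall a b, 0 < a -> a <= b -> b <= R0 ->
    k * (b - a) <= RInt (gf P' thb) a b.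
Proof.
  intros HP R0 HR0.
  set (s := Rpower thb (3/2)). set (T := Rpower thb (5/2)).
  assert (Hs : 0 < s) by apply Rpower_pos'.
  assert (HT : 0 < T) by apply Rpower_pos'.
  destruct (P'_lower P P' c Pinf HP (R0 / s)) as [kP [HkP HkPl]].
  { apply Rdiv_lt_0_compat; lra. }
  pose proof HP as (HdP & HP0 & HcP' & _).
  exists (T / s * kP * / R0). split.
  { apply Rmult_lt_0_compat. apply Rmult_lt_0_compat. apply Rdiv_lt_0_compat; lra. lra.
    apply Rinv_0_lt_compat; lra. }
  intros a b Ha Hab HbR.
  replace (T / s * kP * / R0 * (b - a)) with (RInt (fun _ => T / s * kP * / R0) a b).
  2:{ rewrite RInt_const. unfold scal; simpl; unfold mult; simpl. ring. }
  apply RInt_le. lra.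
  apply (ex_RInt_const (V:=R_CompleteNormedModule)).
  apply ex_RInt_gf; auto; lra.
  intros x Hx. unfold gf. fold s T.
  assert (Hx0 : 0 < x) by lra.
  assert (Hu : kP <= P' (x / s)).
  { apply HkPl. split. apply Rlt_le, Rdiv_lt_0_compat; lra.
    unfold Rdiv. apply Rmult_le_compat_r. left; apply Rinv_0_lt_compat; lra. lra. }
  assert (Hi : / R0 <= / x) by (apply Rinv_le_contravar; lra).
  replace (T * (P' (x / s) / s) / x) with (T / s * P' (x / s) * / x) by (field; lra).
  apply Rmult_le_compat.
  - apply Rlt_le, Rmult_lt_0_compat; [apply Rdiv_lt_0_compat|]; lra.
  - left; apply Rinv_0_lt_compat; lra.
  - apply Rmult_le_compat_l. left; apply Rdiv_lt_0_compat; lra. exact Hu.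
  - exact Hi.
Qed.

Lemma Pi_diff (P P' : R -> R) c Pinf a thb x y :
  P_hyp P P' c Pinf -> 0 < x -> 0 < y ->
  PiF P a thb y - PiF P a thb x = RInt (gf P' thb) x y.
Proof.
  intros HP Hx Hy. pose proof HP as (HdP & HP0 & HcP' & _).
  rewrite !(PiF_eq P P'); auto.
  rewrite <- (RInt_Chasles (V:=R_CompleteNormedModule) (gf P' thb) 1 x y).
  unfold plus; simpl. ring.
  apply ex_RInt_gf; auto; lra. apply ex_RInt_gf; auto.
Qed.

Lemma Pi_dist (P P' : R -> R) c Pinf a thb :
  P_hyp P P' c Pinf -> forall R0, 0 < R0 ->
  exists k, 0 < k /\ forall x y, 0 < x -> x <= R0 -> 0 < y -> y <= R0 ->
    Rabs (x - y) <= Rabs (PiF P a thb x - PiF P a thb y) / k.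
Proof.
  intros HP R0 HR0. destruct (Lip P P' c Pinf thb HP R0 HR0) as [k [Hk HL]].
  exists k. split; auto. intros x y Hx HxR Hy HyR.
  apply (Rmult_le_reg_l k); auto.
  replace (k * (Rabs (PiF P a thb x - PiF P a thb y) / k)) with (Rabs (PiF P a thb x - PiF P a thb y)) by (field; lra).
  destruct (Rle_dec x y).
  - rewrite (Pi_diff P P' c Pinf a thb y x) by auto.
    rewrite Rabs_left1 by lra.
    pose proof (HL x y Hx r HyR).
    assert (0 <= k * (y - x)) by (apply Rmult_le_pos; lra).
    rewrite <- opp_RInt_swap. unfold opp; simpl. rewrite Rabs_Ropp.
    rewrite Rabs_right. lra. lra.
    apply ex_RInt_gf; auto. apply HP.
  - rewrite (Pi_diff P P' c Pinf a thb y x) by auto.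
    rewrite Rabs_right by lra.
    pose proof (HL y x Hy ltac:(lra) HxR).
    assert (0 <= k * (x - y)) by (apply Rmult_le_pos; lra).
    rewrite Rabs_right; lra.
Qed.

Lemma Pi_mono (P P' : R -> R) c Pinf a thb x y :
  P_hyp P P' c Pinf -> 0 < x -> x <= y -> PiF P a thb x <= PiF P a thb y.
Proof.
  intros HP Hx Hxy. destruct (Lip P P' c Pinf thb HP y ltac:(lra)) as [k [Hk HL]].
  pose proof (HL x y Hx Hxy (Rle_refl _)).
  pose proof (Pi_diff P P' c Pinf a thb x y HP Hx ltac:(lra)).
  assert (0 <= k * (y - x)) by (apply Rmult_le_pos; lra). lra.
Qed.

Lemma Pi_1 (P : R -> R) a thb : PiF P a thb 1 = 0.
Proof. unfold PiF. rewrite RInt_point. reflexivity. Qed.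

Lemma deriv_Ps (P P' : R -> R) s z :
  0 < s -> is_derive P (z / s) (P' (z / s)) ->
  is_derive (fun r => P (r / s)) z (P' (z / s) / s).
Proof.
  intros Hs HP.
  replace (P' (z / s) / s) with (scal (/ s) (P' (z/s))).
  2:{ unfold scal; simpl; unfold mult; simpl. field. lra. }
  apply (is_derive_comp (K:=R_AbsRing) P (fun r => r / s)). exact HP.
  assert (Hd : is_derive (fun r => r / s) z (/ s)).
  { auto_derive. auto. field. lra. }
  exact Hd.
Qed.

Lemma Pi_ftc (P P' : R -> R) c Pinf a thb R0 :
  P_hyp P P' c Pinf -> 1 <= R0 ->
  Rpower thb (5/2) / R0 * (P (R0 / Rpower thb (3/2)) - P (1 / Rpower thb (3/2)))
    <= PiF P a thb R0.
Proof.
  intros HP HR.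
  pose proof HP as (HdP & HP0 & HcP' & _ & _ & _ & Hpos & _).
  rewrite (PiF_eq P P') by (auto; lra).
  set (s := Rpower thb (3/2)). set (T := Rpower thb (5/2)).
  assert (Hs : 0 < s) by apply Rpower_pos'.
  assert (HT : 0 < T) by apply Rpower_pos'.
  set (h := fun z => T / R0 * (P' (z / s) / s)).
  assert (Hh : is_RInt h 1 R0 (T / R0 * (P (R0 / s) - P (1 / s)))).
  { replace (T / R0 * (P (R0 / s) - P (1 / s))) with
      (minus (T / R0 * P (R0 / s)) (T / R0 * P (1 / s))).
    2:{ unfold minus, plus, opp; simpl. ring. }
    apply (is_RInt_derive (V:=R_CompleteNormedModule) (fun z => T / R0 * P (z / s)) h).
    - intros x Hx. rewrite Rmin_left, Rmax_right in Hx by lra.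
      unfold h. apply is_derive_scal. apply deriv_Ps; auto.
      apply HdP. apply Rdiv_lt_0_compat; lra.
    - intros x Hx. rewrite Rmin_left, Rmax_right in Hx by lra.
      unfold h.
      apply (continuous_mult (K:=R_AbsRing) (fun _ => T / R0) (fun z => P' (z/s) / s)).
      + apply continuous_const.
      + apply (continuous_mult (K:=R_AbsRing) (fun z => P' (z/s)) (fun _ => / s)).
        * apply (continuous_comp (fun z => z / s) P').
          -- apply (ex_derive_continuous (K:=R_AbsRing) (V:=R_NormedModule)). auto_derive. auto.
          -- apply HcP'. apply Rdiv_lt_0_compat; lra.
        * apply continuous_const. }
  rewrite <- (is_RInt_unique _ _ _ _ Hh).
  apply RInt_le. lra. eexists; exact Hh.
  apply ex_RInt_gf; auto; lra.
  intros x Hx. unfold h, gf. fold s T.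
  assert (0 < P' (x / s)) by (apply Hpos; apply Rlt_le, Rdiv_lt_0_compat; lra).
  assert (0 < T * (P' (x / s) / s)) by (apply Rmult_lt_0_compat; [lra| apply Rdiv_lt_0_compat; lra]).
  replace (T / R0 * (P' (x / s) / s)) with (T * (P' (x / s) / s) * / R0) by (field; lra).
  unfold Rdiv at 3. apply Rmult_le_compat_l. lra.
  apply Rinv_le_contravar; lra.
Qed.

Lemma Pi_unbounded (P P' : R -> R) c Pinf a thb :
  P_hyp P P' c Pinf -> forall L, exists R0, 1 <= R0 /\ L < PiF P a thb R0.
Proof.
  intros HP L.
  pose proof HP as (_ & _ & _ & _ & _ & _ & _ & _ & Hpinf & Hlim).
  set (s := Rpower thb (3/2)). set (T := Rpower thb (5/2)).
  assert (Hs : 0 < s) by apply Rpower_pos'.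
  assert (HT : 0 < T) by apply Rpower_pos'.
  apply is_lim_spec in Hlim. simpl in Hlim.
  assert (He : 0 < Pinf / 2) by lra.
  destruct (Hlim (mkposreal _ He)) as [M1 HM1]. simpl in HM1.
  set (A := T * Rabs (P (1 / s))).
  set (N := (Rabs L + A + 1) * 2 * s / (T * Pinf)).
  assert (HN : 0 < N).
  { unfold N. apply Rdiv_lt_0_compat. 2: apply Rmult_lt_0_compat; lra.
    assert (0 <= A) by (unfold A; apply Rmult_le_pos; [lra | apply Rabs_pos]).
    pose proof (Rabs_pos L). apply Rmult_lt_0_compat; [|lra]. apply Rmult_lt_0_compat; lra. }
  set (Y := Rmax (M1 + 1) (Rmax (1 / s) (Rpower N (3/2)))).
  assert (HY1 : M1 < Y) by (unfold Y; eapply Rlt_le_trans; [|apply Rmax_l]; lra).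
  assert (HY2 : 1 / s <= Y) by (unfold Y; eapply Rle_trans; [|apply Rmax_r]; apply Rmax_l).
  assert (HY3 : Rpower N (3/2) <= Y) by (unfold Y; eapply Rle_trans; [|apply Rmax_r]; apply Rmax_r).
  assert (HY0 : 0 < Y) by (pose proof (Rpower_pos' N (3/2)); lra).
  exists (s * Y). split.
  { replace 1 with (s * (1 / s)) by (field; lra). apply Rmult_le_compat_l; lra. }
  eapply Rlt_le_trans; [| apply (Pi_ftc P P' c Pinf); auto].
  2:{ replace 1 with (s * (1 / s)) by (field; lra). apply Rmult_le_compat_l; lra. }
  fold s T. replace (s * Y / s) with Y by (field; lra).
  specialize (HM1 Y HY1). apply Rabs_def2 in HM1.
  assert (HY53 : Rpower Y (5/3) = Y * Rpower Y (2/3)).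
  { replace (5/3) with (1 + 2/3) by field. rewrite Rpower_plus, Rpower_1; auto. }
  assert (HY23 : N <= Rpower Y (2/3)).
  { assert (N = Rpower (Rpower N (3/2)) (2/3)).
    { rewrite Rpower_mult. replace (3/2*(2/3)) with 1 by field. rewrite Rpower_1; auto. }
    rewrite H at 1. apply Rle_Rpower_l. lra. split; [apply Rpower_pos'|lra]. }
  assert (Hp53 : 0 < Rpower Y (5/3)) by apply Rpower_pos'.
  assert (HPY : Pinf / 2 * Rpower Y (5/3) < P Y).
  { destruct HM1 as [_ HM1].
    assert (Pinf / 2 < P Y / Rpower Y (5/3)) by lra.
    apply (Rmult_lt_compat_r (Rpower Y (5/3))) in H; auto.
    replace (P Y / Rpower Y (5 / 3) * Rpower Y (5 / 3)) with (P Y) in H by (field; lra). lra. }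
  rewrite HY53 in HPY.
  (* T/(sY) (P Y - P(1/s)) >= T/s * Pinf/2 * Y^(2/3) - A *)
  assert (HsY : 1 <= s * Y).
  { replace 1 with (s * (1 / s)) by (field; lra). apply Rmult_le_compat_l; lra. }
  assert (Hq : T / (s * Y) * P (1 / s) <= A).
  { unfold A. apply Rle_trans with (T / (s * Y) * Rabs (P (1 / s))).
    apply Rmult_le_compat_l. apply Rlt_le, Rdiv_lt_0_compat; nra. apply Rle_abs.
    apply Rmult_le_compat_r. apply Rabs_pos.
    unfold Rdiv. rewrite <- (Rmult_1_r T) at 2. apply Rmult_le_compat_l. lra.
    rewrite <- Rinv_1. apply Rinv_le_contravar; lra. }
  assert (Hm : T / (s * Y) * (Pinf / 2 * (Y * Rpower Y (2/3))) <= T / (s * Y) * P Y).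
  { apply Rmult_le_compat_l. apply Rlt_le, Rdiv_lt_0_compat; nra. lra. }
  replace (T / (s * Y) * (Pinf / 2 * (Y * Rpower Y (2/3)))) with
    (T * Pinf / (2 * s) * Rpower Y (2/3)) in Hm by (field; lra).
  assert (HN2 : T * Pinf / (2 * s) * N = Rabs L + A + 1).
  { unfold N. field. split; lra. }
  assert (T * Pinf / (2 * s) * N <= T * Pinf / (2 * s) * Rpower Y (2/3)).
  { apply Rmult_le_compat_l; auto. apply Rlt_le, Rdiv_lt_0_compat; nra. }
  pose proof (Rle_abs L).
  rewrite Rmult_minus_distr_l. lra.
Qed.

Lemma ln_nonpos e : 0 < e <= 1 -> ln e <= 0.
Proof.
  intros He. destruct (Req_dec e 1) as [->|Hn]. rewrite ln_1; lra.
  left. rewrite <- ln_1. apply ln_increasing; lra.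
Qed.

Lemma Rpow_anti e p q : 0 < e <= 1 -> p <= q -> Rpower e q <= Rpower e p.
Proof.
  intros He Hpq. unfold Rpower. pose proof (ln_nonpos e He).
  destruct (Req_dec (q * ln e) (p * ln e)) as [E|E]. rewrite E; lra.
  left. apply exp_increasing. nra.
Qed.

Lemma Rpow_le1 e p : 0 < e <= 1 -> 0 <= p -> Rpower e p <= 1.
Proof. intros He Hp. rewrite <- (Rpower_O e) by lra. apply Rpow_anti; auto. Qed.

Theorem proposition2p4 (P P' : R -> R) (a c Pinf thb m : R) :
  0 < a -> 0 < thb -> P_hyp P P' c Pinf -> 1 <= m ->
  (* Case F(x) = |x^h|^2 *)
  (forall rho : R -> R -> R -> R -> R,
     solves_family P a thb m (fun x1 x2 _ => normh x1 x2 ^ 2) rho ->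
     forall l, 0 < l -> exists C, 0 < C /\
       forall eps x1 x2 x3, 0 < eps <= 1 -> inOmega x1 x2 x3 ->
         normh x1 x2 <= l ->
         (2 <= m -> Rabs (rho eps x1 x2 x3 - 1) <= C * Rpower eps m) /\
         (1 < m < 2 ->
            Rabs (rho eps x1 x2 x3 - 1) <= C * Rpower eps (2 * (m - 1))) /\
         (m = 1 -> forall rho0 : R -> R -> R -> R,
            (forall y1 y2 y3, inOmega y1 y2 y3 ->
               0 < rho0 y1 y2 y3 /\
               PiF P a thb (rho0 y1 y2 y3) = normh y1 y2 ^ 2) ->
            Rabs (rho eps x1 x2 x3 - rho0 x1 x2 x3) <= C * eps)) /\
  (* Case F = 0 *)
  (forall rho : R -> R -> R -> R -> R,
     solves_family P a thb m (fun _ _ _ => 0) rho ->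
     exists C, 0 < C /\
       forall eps x1 x2 x3, 0 < eps <= 1 -> inOmega x1 x2 x3 ->
         Rabs (rho eps x1 x2 x3 - 1) <= C * Rpower eps m).
Proof.
  intros Ha Hthb HP Hm. split.
  - intros rho Hsol l Hl.
    destruct (Pi_unbounded P P' c Pinf a thb HP (l ^ 2)) as [R0 [HR0 HPR0]].
    destruct (Pi_dist P P' c Pinf a thb HP R0 ltac:(lra)) as [k [Hk Hd]].
    exists ((l ^ 2 + 1) / k). split.
    { apply Rdiv_lt_0_compat; nra. }
    intros eps x1 x2 x3 He Hx Hn.
    destruct (Hsol eps x1 x2 x3 He Hx) as [Hr HPr].
    set (r := rho eps x1 x2 x3) in *.
    set (E2 := Rpower eps (2 * (m - 1))) in *.
    set (Em := Rpower eps m) in *.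
    set (h := normh x1 x2 ^ 2) in *.
    unfold Gfun in HPr. unfold inOmega in Hx.
    assert (Hh0 : 0 <= h) by (unfold h; apply pow2_ge_0).
    assert (Hhl : h <= l ^ 2).
    { unfold h. pose proof (sqrt_pos (x1 ^ 2 + x2 ^ 2)). unfold normh in *. nra. }
    assert (HE2 : E2 <= 1) by (apply Rpow_le1; lra).
    assert (HE2p : 0 < E2) by apply Rpower_pos'.
    assert (HEmp : 0 < Em) by apply Rpower_pos'.
    assert (HrR : r <= R0).
    { destruct (Rle_dec r R0) as [|Hn']; auto.
      pose proof (Pi_mono P P' c Pinf a thb R0 r HP ltac:(lra) ltac:(lra)).
      assert (E2 * h <= l ^ 2) by nra. nra. }
    assert (Hmain : Rabs (r - 1) <= (E2 * l ^ 2 + Em) / k).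
    { eapply Rle_trans. apply Hd; auto; lra.
      rewrite Pi_1, Rminus_0_r, HPr.
      unfold Rdiv. apply Rmult_le_compat_r. left; apply Rinv_0_lt_compat; lra.
      eapply Rle_trans. apply Rabs_triang. rewrite Rabs_right by nra.
      rewrite Rabs_left1 by nra. nra. }
    split; [|split].
    + intros Hm2. assert (E2 <= Em) by (apply Rpow_anti; lra).
      eapply Rle_trans. apply Hmain.
      replace ((l ^ 2 + 1) / k * Em) with ((l ^ 2 * Em + Em) / k) by (field; lra).
      unfold Rdiv. apply Rmult_le_compat_r. left; apply Rinv_0_lt_compat; lra. nra.
    + intros Hm2. assert (Em <= E2) by (apply Rpow_anti; lra).
      eapply Rle_trans. apply Hmain.
      replace ((l ^ 2 + 1) / k * E2) with ((l ^ 2 * E2 + E2) / k) by (field; lra).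
      unfold Rdiv. apply Rmult_le_compat_r. left; apply Rinv_0_lt_compat; lra. nra.
    + intros Hm1 rho0 H0.
      destruct (H0 x1 x2 x3 ltac:(unfold inOmega; lra)) as [Hr0 HPr0].
      fold h in HPr0.
      assert (Hr0R : rho0 x1 x2 x3 <= R0).
      { destruct (Rle_dec (rho0 x1 x2 x3) R0) as [|Hn']; auto.
        pose proof (Pi_mono P P' c Pinf a thb R0 (rho0 x1 x2 x3) HP ltac:(lra) ltac:(lra)).
        lra. }
      assert (HE21 : E2 = 1).
      { unfold E2. rewrite Hm1. replace (2 * (1 - 1)) with 0 by ring. apply Rpower_O; lra. }
      assert (HEm1 : Em = eps).
      { unfold Em. rewrite Hm1. apply Rpower_1; lra. }
      eapply Rle_trans. apply Hd; auto.
      rewrite HPr, HPr0, HE21, HEm1.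
      replace (1 * h + eps * - x3 - h) with (- (eps * x3)) by ring.
      rewrite Rabs_Ropp, Rabs_right by nra.
      replace ((l ^ 2 + 1) / k * eps) with ((l ^ 2 + 1) * eps / k) by (field; lra).
      unfold Rdiv. apply Rmult_le_compat_r. left; apply Rinv_0_lt_compat; lra.
      assert (0 <= l ^ 2) by apply pow2_ge_0. nra.
  - intros rho Hsol.
    destruct (Pi_dist P P' c Pinf a thb HP 1 ltac:(lra)) as [k [Hk Hd]].
    exists (1 / k). split.
    { apply Rdiv_lt_0_compat; lra. }
    intros eps x1 x2 x3 He Hx.
    destruct (Hsol eps x1 x2 x3 He Hx) as [Hr HPr].
    set (r := rho eps x1 x2 x3) in *.
    set (Em := Rpower eps m) in *.
    unfold Gfun in HPr. unfold inOmega in Hx.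
    assert (HEmp : 0 < Em) by apply Rpower_pos'.
    assert (HEm1 : Em <= 1) by (apply Rpow_le1; lra).
    rewrite Rmult_0_r, Rplus_0_l in HPr.
    assert (Hr1 : r <= 1).
    { destruct (Rle_dec r 1) as [|Hn']; auto.
      pose proof (Pi_mono P P' c Pinf a thb 1 r HP ltac:(lra) ltac:(lra)).
      rewrite Pi_1 in H. nra. }
    eapply Rle_trans. apply Hd; auto; lra.
    rewrite Pi_1, Rminus_0_r, HPr.
    rewrite Rabs_left1 by nra.
    replace (1 / k * Em) with (Em / k) by (field; lra).
    unfold Rdiv. apply Rmult_le_compat_r. left; apply Rinv_0_lt_compat; lra. nra.
Qed.
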